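(* Let $(C_\bullet,\partial^C_\bullet)$ be a chain complex in which each $C_n$ is the free abelian group on a finite set $K_n$ (nonempty for only finitely many $n$), and $(G_\bullet,\partial^G_\bullet)$ a chain complex of finite abelian groups, with $\mathrm{hom}^p$, $\mathrm{hom}_p$, $d^p$, $d_p$, $\chi$, $\mathcal H$, $P^\alpha$, $Q_{\hat\beta}$ as in the context. For $\hat\rho\in\mathrm{hom}_{-1}$ and $\omega\in\mathrm{hom}^1$ define the fake-gauge and fake-holonomy operators on $\mathcal H$: $$A_{\hat\rho}=\frac{1}{|\mathrm{hom}^{-1}|}\sum_{\alpha\in\mathrm{hom}^{-1}}\overline{\chi_{\hat\rho}(\alpha)}\,P^{d^{-1}\alpha},\qquad B^{\omega}=\frac{1}{|\mathrm{hom}_{1}|}\sum_{\hat\beta\in\mathrm{hom}_{1}}\overline{\chi_{\hat\beta}(\omega)}\,Q_{d_1\hat\beta}.$$ Then for all $\hat\rho,\hat\rho'\in\mathrm{hom}_{-1}$ and $\omega,\omega'\in\mathrm{hom}^1$: (1) $A_{\hat\rho}B^\omega=B^\omega A_{\hat\rho}$; (2) $A_{\hat\rho}^\dagger=A_{\hat\rho}$ and $(B^\omega)^\dagger=B^\omega$; (3) $A_{\hat\rho}A_{\hat\rho'}=\delta(\hat\rho,\hat\rho')A_{\hat\rho'}$ and $B^\omega B^{\omega'}=\delta(\omega,\omega')B^{\omega'}$; (4) $\sum_{\hat\rho\in\mathrm{hom}_{-1}}A_{\hat\rho}=\mathbb 1_{\mathcal H}$ and $\sum_{\omega\in\mathrm{hom}^1}B^\omega=\mathbb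 1_{\mathcal H}$. In particular, the $A_{\hat\rho}$ and $B^\omega$ are mutually commuting orthogonal projectors.
   Context: $\mathrm{hom}^p=\bigoplus_n\mathrm{Hom}(C_n,G_{n-p})$, $\mathrm{hom}_p=\bigoplus_n\mathrm{Hom}(C_n,\hat G_{n-p})$ with $\hat G_m=\mathrm{Hom}(G_m,U(1))$, abelian groups under pointwise addition. The pairing $\chi_{\hat\rho}(\omega)=\prod_n\prod_{x\in K_n}\hat\rho_n(x)(\omega_n(x))\in U(1)$ for $\hat\rho\in\mathrm{hom}_p,\ \omega\in\mathrm{hom}^p$ is nondegenerate. $d^p:\mathrm{hom}^p\to\mathrm{hom}^{p+1}$ is $(d^p\omega)_n=\omega_{n-1}\circ\partial^C_n-(-1)^p\,\partial^G_{n-p}\circ\omega_n$, and $d_{p+1}:\mathrm{hom}_{p+1}\to\mathrm{hom}_p$ is the unique homomorphism with $\chi_{d_{p+1}\hat\nu}(\omega)=\chi_{\hat\nu}(d^p\omega)$. $\mathcal H$ is the Hilbert space with orthonormal basis $\{|\omega\rangle:\omega\in\mathrm{hom}^0\}$; $P^\alpha|\omega\rangle=|\omega+\alpha\rangle$ for $\alpha\in\mathrm{hom}^0$ and $Q_{\hat\beta}|\omega\rangle=\chi_{\hat\beta}(\omega)|\omega\rangle$ for $\hat\beta\in\mathrm{hom}_0$. $\delta$ is the Kronecker delta and $\dagger$ the Hilbert-space adjoint. *)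

(* Defs.v *)
From HB Require Import structures.
From mathcomp Require Import all_boot all_order all_algebra.
From mathcomp Require Import algC.
Set Implicit Arguments. Unset Strict Implicit. Unset Printing Implicit Defensive.
Import Order.TTheory GRing.Theory Num.Theory.
Local Open Scope ring_scope.

(* Encoding:
   - [Cell] is the finite disjoint union of the sets K_n; [deg x] is the degree n
     with x in K_n.  C_n is the free abelian group on {x | deg x = n}.
   - [bdC x y] is the integer coefficient of y in the boundary of x.
   - [G n] are finite abelian groups, [dG n : G n -> G (n-1)] the boundaries.
   - [Ghat m] is a finite type together with [chr : Ghat m -> G m -> algC]
     identifying it with Hom(G_m, U(1)) (the dual group).                  *)

Section Fake.
Variable Cell : finType.
Variable deg : Cell -> int.
Variable bdC : Cell -> Cell -> int.
Variable G : int -> finZmodType.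
Variable dG : forall n : int, {additive G n -> G (n - 1)}.
Variable Ghat : int -> finType.
Variable chr : forall m : int, Ghat m -> G m -> algC.

Definition bdC_graded := forall x y, bdC x y != 0 -> deg y = deg x - 1.
Definition bdC_sq0 := forall x z, \sum_(y : Cell) bdC x y * bdC y z = 0.
Definition dG_sq0 := forall (n : int) (a : G n), dG (n - 1) (dG n a) = 0.

Definition is_U1char (m : int) (f : G m -> algC) :=
  (forall a b, f (a + b) = f a * f b) /\ (forall a, `|f a| = 1).

Definition is_dual :=
  forall m : int,
    (forall g : Ghat m, is_U1char (chr g)) /\
    (forall g1 g2 : Ghat m, (forall a, chr g1 a = chr g2 a) -> g1 = g2) /\
    (forall f : G m -> algC, is_U1char f -> exists g : Ghat m, forall a, chr g a = f a).

(* homu^p = (+)_n Hom(C_n, G_{n-p}) = functions on cells x |-> G_(deg x - p) *)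
Definition homu (p : int) := {dffun forall x : Cell, G (deg x - p)}.
(* hom_p = (+)_n Hom(C_n, Ghat_{n-p}) *)
Definition homl (p : int) := {dffun forall x : Cell, Ghat (deg x - p)}.

Definition addh (p : int) (a b : homu p) : homu p := [ffun x => a x + b x].

Definition castG (m1 m2 : int) (a : G m1) : G m2 :=
  match m1 =P m2 with
  | ReflectT e => eq_rect m1 (fun m => G m : Type) a m2 e
  | ReflectF _ => 0
  end.

(* coboundary d : homu^p -> homu^q (used with q = p + 1):
   (d w)_n = w_{n-1} o bd^C_n - (-1)^p bd^G_{n-p} o w_n *)
Definition dcob (p q : int) (w : homu p) : homu q :=
  [ffun x => \sum_(y : Cell) (@castG (deg y - p) (deg x - q) (w y) *~ bdC x y)
             - (@castG (deg x - p - 1) (deg x - q) (dG (deg x - p) (w x)) *~ ((-1 : int) ^ p))].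

Definition chi (p : int) (r : homl p) (w : homu p) : algC :=
  \prod_(x : Cell) chr (r x) (w x).

(* Hilbert space with orthonormal basis homu^0; operators are matrices
   indexed by an enumeration of homu^0 *)
Definition dimH := #|{: homu 0}|.
Definition Op := 'M[algC]_dimH.
Definition bas (i : 'I_dimH) : homu 0 := enum_val i.

Definition adj (M : Op) : Op := (map_mx (fun z : algC => z^*) M)^T.

(* P^alpha |omega> = |omega + alpha> *)
Definition Pop (a : homu 0) : Op := \matrix_(i, j) ((bas i == addh (bas j) a)%:R).
(* Q_beta |omega> = chi_beta(omega) |omega> *)
Definition Qop (b : homl 0) : Op := \matrix_(i, j) ((i == j)%:R * chi b (bas j)).

Definition Aop (r : homl (-1)) : Op :=
  (#|{: homu (-1)}|%:R)^-1 *: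
    \sum_(a : homu (-1)) ((chi r a)^* *: Pop (@dcob (-1) 0 a)).

(* fake-holonomy operator; d1 is the dual map d_1 : hom_1 -> hom_0 *)
Definition Bop (d1 : homl 1 -> homl 0) (w : homu 1) : Op :=
  (#|{: homl 1}|%:R)^-1 *:
    \sum_(b : homl 1) ((chi b w)^* *: Qop (d1 b)).

End Fake.

(* Main.v *)
Require Import Defs.
From HB Require Import structures.
From mathcomp Require Import all_boot all_order all_algebra.
From mathcomp Require Import algC.
From mathcomp Require Import fingroup finalg character classfun ring zify.
Import Order.TTheory GRing.Theory Num.Theory FinRing.Theory.
Local Open Scope ring_scope.
Local Open Scope ring_scope.

Section Pairing.
Set Implicit Arguments. Unset Strict Implicit.
Variables (V H : finType) (add : V -> V -> V) (z : V) (opp : V -> V) (c : H -> V -> algC).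
Hypothesis addK : forall u v, add (add u v) (opp v) = u.
Hypothesis addN : forall v, add v (opp v) = z.
Hypothesis cM : forall h u v, c h (add u v) = c h u * c h v.
Hypothesis cN : forall h v, `|c h v| = 1.
Hypothesis cI : forall h1 h2, (forall v, c h1 v = c h2 v) -> h1 = h2.
Hypothesis cS : forall v, v != z -> exists h, c h v != 1.
Hypothesis cP : forall h1 h2, exists h, forall v, c h v = c h1 v * c h2 v.
Hypothesis cT : exists h, forall v, c h v = 1.
Hypothesis cz : forall h, c h z = 1.

Lemma c_neq0 h v : c h v != 0.
Proof. by apply/eqP => e; move: (cN h v); rewrite e normr0 => /eqP; rewrite eq_sym oner_eq0. Qed.

Lemma c_mulconj h v : c h v * (c h v)^* = 1.
Proof. by rewrite -normCK cN expr1n. Qed.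

Lemma c_opp h v : c h (opp v) = (c h v)^*.
Proof.
apply: (mulfI (c_neq0 h v)); rewrite -cM addN cz.
by rewrite c_mulconj.
Qed.

Lemma O1 h h' : \sum_v c h v * (c h' v)^* = (#|V| * (h == h'))%:R.
Proof.
have [<-|ne] := eqVneq h h'.
  rewrite muln1 (eq_bigr (fun _ => 1)) => [|v _]; last exact: c_mulconj.
  by rewrite sumr_const.
have [v0 nv0] : exists v0, c h v0 != c h' v0.
  apply/existsP; apply: contraT; rewrite negb_exists => /forallP Hv.
  by rewrite (cI (h1:=h) (h2:=h') (fun v => eqP (negbNE (Hv v)))) eqxx in ne.
rewrite muln0.
set S := \sum_v _.
have e : S = c h v0 * (c h' v0)^* * S.
  have inj : injective (fun v => add v v0).
    by move=> u v /(congr1 (fun w => add w (opp v0))); rewrite !addK.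
  rewrite {1}/S (reindex_inj inj) /=.
  rewrite mulr_sumr; apply: eq_bigr => v _.
  by rewrite !cM rmorphM /=; ring.
have k1 : c h v0 * (c h' v0)^* != 1.
  apply: contra nv0 => /eqP e1.
  by apply/eqP; rewrite -[c h v0]mulr1 -(c_mulconj h' v0) mulrCA e1 mulr1.
have : (1 - c h v0 * (c h' v0)^*) * S = 0 by rewrite mulrBl mul1r -e subrr.
by move/eqP; rewrite mulf_eq0 subr_eq0 eq_sym (negbTE k1) /= => /eqP.
Qed.

Lemma O2 v : \sum_h c h v = (#|H| * (v == z))%:R.
Proof.
have [->|ne] := eqVneq v z.
  rewrite muln1 (eq_bigr (fun _ => 1)) => [|h _]; last exact: cz.
  by rewrite sumr_const.
have [h0 nh0] := cS ne.
have cPb h1 h2 : exists h, [forall u, c h u == c h1 u * c h2 u].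
  by case: (cP h1 h2) => h E; exists h; apply/forallP => u; rewrite E.
pose mul h := xchoose (cPb h h0).
have mulE h u : c (mul h) u = c h u * c h0 u.
  by apply/eqP; move/forallP: (xchooseP (cPb h h0)); apply.
rewrite muln0.
set S := \sum_h _.
have e : S = c h0 v * S.
  have inj : injective mul.
    move=> h1 h2 eh; apply: cI => u.
    by apply: (mulIf (c_neq0 h0 u)); rewrite -!mulE eh.
  rewrite {1}/S (reindex_inj inj) /=.
  by rewrite mulr_sumr; apply: eq_bigr => h _; rewrite mulE mulrC.
have : (1 - c h0 v) * S = 0 by rewrite mulrBl mul1r -e subrr.
by move/eqP; rewrite mulf_eq0 subr_eq0 eq_sym (negbTE nh0) /= => /eqP.
Qed.

Lemma card_eq : #|H| = #|V|.
Proof.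
have [h0 h0E] := cT.
have e1 : \sum_h \sum_v c h v = #|V|%:R.
  rewrite (eq_bigr (fun h => (#|V| * (h == h0))%:R)); last first.
    by move=> h _; rewrite -(O1 h h0); apply: eq_bigr => v _; rewrite h0E rmorph1 mulr1.
  rewrite (bigD1 h0) //= eqxx muln1 big1 ?addr0 // => h nh.
  by rewrite (negbTE nh) muln0.
have e2 : \sum_v \sum_h c h v = #|H|%:R.
  rewrite (eq_bigr (fun v => (#|H| * (v == z))%:R)); last by move=> v _; rewrite O2.
  rewrite (bigD1 z) //= eqxx muln1 big1 ?addr0 // => v nv.
  by rewrite (negbTE nv) muln0.
by apply/eqP; rewrite -(eqr_nat algC) -e1 -e2 exchange_big.
Qed.
End Pairing.
Lemma sep_char (V : finZmodType) (a : V) : a != 0 ->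
  exists f : V -> algC, [/\ forall x y, f (x + y) = f x * f y,
       forall x, `|f x| = 1 & f a != 1].
Proof.
move=> a0.
have : a \notin \bigcap_i cfker 'chi[[set: V]%G]_i.
  by rewrite TI_cfker_irr inE.
have [/forallP H|/forallPn [i ai]] := boolP [forall i, a \in cfker 'chi[[set: V]%G]_i].
  by move/negP; case; apply/bigcapP => i _; apply: H.
move=> _.
have lin : 'chi[[set: V]%G]_i \is a linear_char.
  by apply/char_abelianP; apply: zmod_abelian.
exists (fun v => 'chi[[set: V]%G]_i v); split.
- by move=> x y; rewrite -lin_charM ?inE.
- by move=> x; rewrite normC_lin_char ?inE.
- by move: ai; rewrite cfkerEirr inE lin_char1.
Qed.

Section Inst.
Set Implicit Arguments. Unset Strict Implicit.
Variable Cell : finType.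
Variable deg : Cell -> int.
Variable G : int -> finZmodType.
Variable Ghat : int -> finType.
Variable chr : forall m : int, Ghat m -> G m -> algC.
Hypothesis hdual : is_dual chr.

Lemma chrM m (g : Ghat m) (a b : G m) : chr g (a + b) = chr g a * chr g b.
Proof. by case: (hdual m) => /(_ g) [fM _] _; apply: fM. Qed.
Lemma chrN m (g : Ghat m) (a : G m) : `|chr g a| = 1.
Proof. by case: (hdual m) => /(_ g) [_ fN] _; apply: fN. Qed.
Lemma chr0 m (g : Ghat m) : chr g 0 = 1.
Proof.
have e := chrM g 0 0; rewrite addr0 in e.
have nz : chr g 0 != 0 by apply/eqP => e0; move: (chrN g 0); rewrite e0 normr0 => /eqP; rewrite eq_sym oner_eq0.
by apply: (mulfI nz); rewrite -e mulr1.
Qed.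
Lemma chrI m (g1 g2 : Ghat m) : (forall a, chr g1 a = chr g2 a) -> g1 = g2.
Proof. by case: (hdual m) => _ [H _]; apply: H. Qed.
Lemma chrS m (f : G m -> algC) : (forall a b, f (a + b) = f a * f b) -> (forall a, `|f a| = 1) ->
  exists g : Ghat m, [forall a, chr g a == f a].
Proof.
move=> fM fN; case: (hdual m) => _ [_ H]; have [g hg] := H f (conj fM fN).
by exists g; apply/forallP => a; rewrite hg.
Qed.

Definition zeroh p : homu deg G p := [ffun x => 0].
Definition opph p (a : homu deg G p) : homu deg G p := [ffun x => - a x].

Variable p : int.

Lemma addhK (u v : homu deg G p) : addh (addh u v) (opph v) = u.
Proof. by apply/ffunP => x; rewrite !ffunE addrK. Qed.
Lemma addhN (v : homu deg G p) : addh v (opph v) = zeroh p.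
Proof. by apply/ffunP => x; rewrite !ffunE subrr. Qed.
Lemma chiM (r : homl deg Ghat p) u v : chi chr r (addh u v) = chi chr r u * chi chr r v.
Proof. by rewrite /chi -big_split; apply: eq_bigr => x _; rewrite ffunE chrM. Qed.
Lemma chiN (r : homl deg Ghat p) v : `|chi chr r v| = 1.
Proof. by rewrite /chi normr_prod big1 // => x _; rewrite chrN. Qed.
Lemma chiz (r : homl deg Ghat p) : chi chr r (zeroh p) = 1.
Proof. by rewrite /chi big1 // => x _; rewrite ffunE chr0. Qed.

Lemma castG_id m (a : G m) : castG m a = a.
Proof.
rewrite /castG; case: eqP => // e.
by rewrite (eq_irrelevance e (erefl m)).
Qed.

Definition single (x : Cell) (a : G (deg x - p)) : homu deg G p :=
  [ffun y => if y == x then castG (deg y - p) a else 0].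

Lemma chi_single (r : homl deg Ghat p) (x : Cell) (a : G (deg x - p)) : chi chr r (@single x a) = chr (r x) a.
Proof.
rewrite /chi (bigD1 x) //= big1 ?mulr1.
  by rewrite ffunE eqxx castG_id.
by move=> y ny; rewrite ffunE (negbTE ny) chr0.
Qed.

Lemma chiI (r1 r2 : homl deg Ghat p) : (forall v, chi chr r1 v = chi chr r2 v) -> r1 = r2.
Proof.
move=> H; apply/ffunP => x; apply: chrI => a.
by rewrite -!chi_single H.
Qed.

Lemma chiT : exists r : homl deg Ghat p, forall v, chi chr r v = 1.
Proof.
have E y : exists g : Ghat (deg y - p), [forall a, chr g a == 1].
  by apply: chrS => [a b|a]; rewrite ?mulr1 ?normr1.
exists [ffun y => xchoose (E y)] => v.
rewrite /chi big1 // => y _; rewrite ffunE.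
by move/forallP: (xchooseP (E y)) => /(_ (v y)) /eqP.
Qed.

Lemma chiP (r1 r2 : homl deg Ghat p) : exists r : homl deg Ghat p,
  forall v, chi chr r v = chi chr r1 v * chi chr r2 v.
Proof.
have E y : exists g : Ghat (deg y - p), [forall a, chr g a == chr (r1 y) a * chr (r2 y) a].
  apply: chrS => [a b|a]; first by rewrite !chrM; ring.
  by rewrite normrM !chrN mulr1.
exists [ffun y => xchoose (E y)] => v.
rewrite /chi -big_split; apply: eq_bigr => y _; rewrite ffunE.
by move/forallP: (xchooseP (E y)) => /(_ (v y)) /eqP.
Qed.

Lemma chiS (v : homu deg G p) : v != zeroh p -> exists r : homl deg Ghat p, chi chr r v != 1.
Proof.
move=> nz.
have [x vx] : exists x, v x != 0.
  apply/existsP; apply: contraT; rewrite negb_exists => /forallP Hx.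
  have ez : v = zeroh p.
    by apply/ffunP => x; rewrite ffunE; apply/eqP; move: (Hx x); rewrite negbK.
  by rewrite ez eqxx in nz.
have E y : exists g : Ghat (deg y - p),
    if y == x then chr g (v y) != 1 else [forall a, chr g a == 1].
  case: eqP => [->|_].
    have [f [fM fN fa]] := sep_char vx.
    have [g /forallP hg] := chrS fM fN.
    by exists g; rewrite (eqP (hg (v x))).
  by apply: chrS => [a b|a]; rewrite ?mulr1 ?normr1.
exists [ffun y => xchoose (E y)].
rewrite /chi (bigD1 x) //= big1 ?mulr1.
  by rewrite ffunE; move: (xchoose (E x)) (xchooseP (E x)) => g /=; rewrite eqxx.
move=> y ny; rewrite ffunE.
move: (xchoose (E y)) (xchooseP (E y)) => g /=.
by rewrite (negbTE ny) => /forallP /(_ (v y)) /eqP.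
Qed.

Lemma O1h (r r' : homl deg Ghat p) :
  \sum_v chi chr r v * (chi chr r' v)^* = (#|{: homu deg G p}| * (r == r'))%:R.
Proof. exact: (O1 addhK chiM chiN chiI). Qed.

Lemma O2h (v : homu deg G p) :
  \sum_r chi chr r v = (#|{: homl deg Ghat p}| * (v == zeroh p))%:R.
Proof. exact: (O2 chiN chiI chiS chiP chiz). Qed.

Lemma cardh : #|{: homl deg Ghat p}| = #|{: homu deg G p}|.
Proof. exact: (card_eq addhK chiM chiN chiI chiS chiP chiT chiz). Qed.

Lemma chi_opp (r : homl deg Ghat p) v : chi chr r (opph v) = (chi chr r v)^*.
Proof. exact: (c_opp addhN chiM chiN chiz). Qed.

End Inst.

Section Cast.
Set Implicit Arguments. Unset Strict Implicit.
Variable G : int -> finZmodType.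

Lemma castG_idm m (a : G m) : castG m a = a.
Proof.
rewrite /castG; case: eqP => // e.
by rewrite (eq_irrelevance e (erefl m)).
Qed.

Lemma castG_add m1 m2 (a b : G m1) : castG m2 (a + b) = castG m2 a + castG m2 b.
Proof. by rewrite /castG; case: eqP => [e|_]; [subst m2 | rewrite addr0]. Qed.

Lemma castG0 m1 m2 : castG m2 (0 : G m1) = 0.
Proof. by rewrite /castG; case: eqP => [e|_] //; subst m2. Qed.

Lemma castGN m1 m2 (a : G m1) : castG m2 (- a) = - castG m2 a.
Proof. by rewrite /castG; case: eqP => [e|_]; [subst m2 | rewrite oppr0]. Qed.

Lemma castG_sum m1 m2 (I : finType) (F : I -> G m1) :
  castG m2 (\sum_i F i) = \sum_i castG m2 (F i).
Proof. by apply: (big_morph _ (@castG_add m1 m2) (@castG0 m1 m2)). Qed.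

Lemma castGMz m1 m2 (a : G m1) k : castG m2 (a *~ k) = castG m2 a *~ k.
Proof. by rewrite /castG; case: eqP => [e|_]; [subst m2 | rewrite mul0rz]. Qed.

Lemma castG_comp m1 m2 m3 (a : G m1) : m1 = m2 -> castG m3 (castG m2 a) = castG m3 a.
Proof. by move=> e; subst m2; rewrite castG_idm. Qed.

Lemma castG_ne m1 m2 (a : G m1) : m1 != m2 -> castG m2 a = 0.
Proof. by rewrite /castG; case: eqP. Qed.

Variable dG : forall n : int, {additive G n -> G (n - 1)}.

Lemma castG_dG m1 m2 (a : G m1) : m1 = m2 -> dG m2 (castG m2 a) = castG (m2 - 1) (dG m1 a).
Proof. by move=> e; subst m2; rewrite !castG_idm. Qed.
End Cast.

Section Chain.
Set Implicit Arguments. Unset Strict Implicit.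
Variable Cell : finType.
Variable deg : Cell -> int.
Variable bdC : Cell -> Cell -> int.
Variable G : int -> finZmodType.
Variable dG : forall n : int, {additive G n -> G (n - 1)}.
Hypothesis hgr : bdC_graded deg bdC.
Hypothesis hsq : bdC_sq0 bdC.
Hypothesis hdsq : dG_sq0 dG.

Lemma dcob_add p q (a b : homu deg G p) :
  dcob bdC dG q (addh a b) = addh (dcob bdC dG q a) (dcob bdC dG q b).
Proof.
apply/ffunP => x; rewrite /addh !ffunE.
under eq_bigr do rewrite ffunE castG_add mulrzDl.
rewrite big_split /= raddfD castG_add mulrzDl /=.
by rewrite opprD addrACA.
Qed.

Lemma dd0 (a : homu deg G (-1)) : dcob bdC dG 1 (dcob bdC dG 0 a) = @zeroh _ deg G 1.
Proof.
apply/ffunP => x; rewrite !ffunE.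
under eq_bigr do rewrite ffunE.
have s1 : (-1 : int) ^ (-1) = -1 by rewrite exprN1 invrN1.
rewrite s1 expr0z mulr1z.
under eq_bigr do rewrite mulrN1z opprK castG_add castG_sum mulrzDl.
rewrite big_split /= mulrN1z opprK raddfD /= castG_add raddf_sum castG_sum /=.
have T1 : \sum_i (\sum_y castG (deg x - 1) (castG (deg i - 0) (a y) *~ bdC i y)) *~ bdC x i = 0.
  under eq_bigr => i _.
    rewrite mulrz_suml.
    under eq_bigr => y _.
      have -> : castG (deg x - 1) (castG (deg i - 0) (a y) *~ bdC i y) *~ bdC x i
             = castG (deg x - 1) (a y) *~ (bdC x i * bdC i y).
        have [->|nz] := eqVneq (bdC i y) 0; first by rewrite mulr0 !mulr0z castG0 mul0rz.
        rewrite castGMz (castG_comp _ _ (m2 := deg i - 0)).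
          by rewrite mulrC mulrzA.
        by move: (hgr nz) => ->; lia.
      over.
    over.
  rewrite exchange_big /=; apply: big1 => y _.
  by rewrite -mulrz_sumr hsq mulr0z.
rewrite T1 add0r.
rewrite (castG_dG _ (m1 := deg x - -1 - 1)); last by lia.
rewrite hdsq !castG0 addr0.
apply/eqP; rewrite subr_eq0; apply/eqP; apply: eq_bigr => i _.
rewrite (castG_comp _ _ (m2 := deg i - 0)); last by lia.
rewrite raddfMz castGMz /=.
have [->|nz] := eqVneq (bdC x i) 0; first by rewrite !mulr0z.
rewrite (castG_dG _ (m1 := deg i - -1)); last by move: (hgr nz) => ->; lia.
by rewrite (castG_comp _ _ (m2 := deg x - 0 - 1)) //; move: (hgr nz) => ->; lia.
Qed.
End Chain.

Section Ops.
Set Implicit Arguments. Unset Strict Implicit.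
Variable Cell : finType.
Variable deg : Cell -> int.
Variable G : int -> finZmodType.

Local Notation H0 := (homu deg G 0).

Lemma bas_inj : injective (@bas _ deg G).
Proof. exact: enum_val_inj. Qed.

Lemma bas_onto (u : H0) : exists k, @bas _ deg G k = u.
Proof. by exists (enum_rank u); rewrite /bas enum_rankK. Qed.

Lemma addhA p (u v w : homu deg G p) : addh (addh u v) w = addh u (addh v w).
Proof. by apply/ffunP => x; rewrite !ffunE addrA. Qed.
Lemma addh0 p (u : homu deg G p) : addh u (zeroh deg G p) = u.
Proof. by apply/ffunP => x; rewrite !ffunE addr0. Qed.
Lemma addhNK p (u v : homu deg G p) : addh (addh u (opph v)) v = u.
Proof. by apply/ffunP => x; rewrite !ffunE subrK. Qed.
Lemma opphK p (u : homu deg G p) : opph (opph u) = u.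
Proof. by apply/ffunP => x; rewrite !ffunE opprK. Qed.

Lemma Pop_mul (a b : H0) : Pop a *m Pop b = Pop (addh b a).
Proof.
apply/matrixP => i j; rewrite !mxE.
have [k0 k0E] := bas_onto (addh (bas j) b).
rewrite (bigD1 k0) //= big1 ?addr0.
  by rewrite !mxE k0E eqxx mulr1 addhA.
move=> k nk; rewrite !mxE -k0E.
by rewrite (inj_eq bas_inj) (negbTE nk) mulr0.
Qed.

Lemma Pop0 : Pop (zeroh deg G 0) = 1%:M.
Proof.
by apply/matrixP => i j; rewrite !mxE addh0 (inj_eq bas_inj).
Qed.

Lemma adjE (M : Op deg G) i j : adj M i j = (M j i)^*.
Proof. by rewrite !mxE. Qed.

Lemma adj_sum (I : finType) (F : I -> Op deg G) : adj (\sum_i F i) = \sum_i adj (F i).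
Proof.
apply/matrixP => i j; rewrite adjE !summxE rmorph_sum; apply: eq_bigr => k _.
by rewrite adjE.
Qed.

Lemma adjZ k (M : Op deg G) : adj (k *: M) = k^* *: adj M.
Proof. by apply/matrixP => i j; rewrite !mxE rmorphM. Qed.

Lemma adjPop (a : H0) : adj (Pop a) = Pop (opph a).
Proof.
apply/matrixP => i j; rewrite adjE !mxE conjC_nat.
congr (_%:R); congr (nat_of_bool _); apply/idP/idP => /eqP e; apply/eqP.
  by rewrite e addhK.
by rewrite e addhNK.
Qed.
End Ops.

Section Main.
Set Implicit Arguments. Unset Strict Implicit.
Variable Cell : finType.
Variable deg : Cell -> int.
Variable bdC : Cell -> Cell -> int.
Variable G : int -> finZmodType.
Variable dG : forall n : int, {additive G n -> G (n - 1)}.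
Variable Ghat : int -> finType.
Variable chr : forall m : int, Ghat m -> G m -> algC.
Hypothesis hgr : bdC_graded deg bdC.
Hypothesis hsq : bdC_sq0 bdC.
Hypothesis hdsq : dG_sq0 dG.
Hypothesis hdual : is_dual chr.

Local Notation d := (@dcob _ deg bdC G dG (-1) 0).
Local Notation N := (#|{: homu deg G (-1)}|).

Lemma addhE p (u v : homu deg G p) x : addh u v x = u x + v x.
Proof. by rewrite ffunE. Qed.
Lemma zerohE p x : zeroh deg G p x = 0.
Proof. by rewrite ffunE. Qed.
Lemma opphE p (u : homu deg G p) x : opph u x = - u x.
Proof. by rewrite ffunE. Qed.

Lemma d_zero : d (zeroh deg G (-1)) = zeroh deg G 0.
Proof.
apply/ffunP => x; have := congr1 (fun f : homu deg G 0 => f x) (dcob_add bdC dG 0 (zeroh deg G (-1)) (zeroh deg G (-1))).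
rewrite addh0 addhE => /esym/eqP; rewrite -subr_eq0 addrK => /eqP ->.
by rewrite zerohE.
Qed.

Lemma d_opp a : d (opph a) = opph (d a).
Proof.
apply/ffunP => x; have := congr1 (fun f : homu deg G 0 => f x) (dcob_add bdC dG 0 a (opph a)).
rewrite addhN d_zero addhE zerohE => e.
by apply/eqP; rewrite opphE -addr_eq0 [X in X == 0]addrC -e.
Qed.

Lemma N_neq0 : (N%:R : algC) != 0.
Proof. by rewrite pnatr_eq0 -lt0n; apply/card_gt0P; exists (zeroh deg G (-1)). Qed.

Lemma A_mul (r r' : homl deg Ghat (-1)) :
  Aop bdC dG chr r *m Aop bdC dG chr r' = (r == r')%:R *: Aop bdC dG chr r'.
Proof.
rewrite /Aop -scalemxAl -scalemxAr mulmx_suml.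
under eq_bigr => a _.
  rewrite mulmx_sumr.
  under eq_bigr => b _ do rewrite -scalemxAl -scalemxAr scalerA Pop_mul -dcob_add.
  have inj : injective (fun g => addh g (opph a)).
    by move=> u v /(congr1 (fun w => addh w a)); rewrite !addhNK.
  rewrite (reindex_inj inj) /=.
  under eq_bigr => g _ do rewrite addhNK (chiM hdual) (chi_opp hdual) rmorphM /= conjCK.
  over.
rewrite /= exchange_big /=.
under eq_bigr => g _.
  rewrite (eq_bigr (fun a => (chi chr r' a * (chi chr r a)^*) *: ((chi chr r' g)^* *: Pop (d g)))); last first.
    by move=> a _; rewrite scalerA; congr (_ *: _); ring.
  rewrite -scaler_suml (O1h hdual) /=.
  over.
rewrite /= -scaler_sumr scalerA scalerA scalerA; congr (_ *: _).
rewrite eq_sym; case: (r == r'); last by rewrite muln0 !mulr0 mul0r.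
rewrite muln1 -mulrA mulVf ?N_neq0 // mulr1 /= mul1r. by [].
Qed.

Lemma N_conj : ((N%:R : algC)^-1)^* = (N%:R)^-1.
Proof. by rewrite fmorphV; congr (_^-1); exact: conjC_nat. Qed.

Lemma A_adj (r : homl deg Ghat (-1)) : adj (Aop bdC dG chr r) = Aop bdC dG chr r.
Proof.
rewrite /Aop adjZ N_conj adj_sum; congr (_ *: _).
under eq_bigr => a _ do rewrite adjZ conjCK adjPop -d_opp.
have inj : injective (@opph _ deg G (-1)).
  by move=> u v /(congr1 (@opph _ deg G (-1))); rewrite !opphK.
rewrite (reindex_inj inj) /=.
by apply: eq_bigr => a _; rewrite opphK (chi_opp hdual).
Qed.

Lemma A_sum : \sum_(s : homl deg Ghat (-1)) Aop bdC dG chr s = 1%:M.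
Proof.
rewrite /Aop -scaler_sumr exchange_big /=.
under eq_bigr => a _ do rewrite -scaler_suml -rmorph_sum (O2h hdual) rmorph_nat.
rewrite (bigD1 (zeroh deg G (-1))) //= big1 ?addr0; last first.
  by move=> a na; rewrite (negbTE na) muln0 scale0r.
rewrite eqxx muln1 d_zero Pop0 scalerA (cardh deg hdual) mulVf ?scale1r //.
exact: N_neq0.
Qed.

Lemma addhN_eq0 p (u w : homu deg G p) : (addh u (opph w) == zeroh deg G p) = (w == u).
Proof.
apply/eqP/eqP => [e|->]; last exact: addhN.
by rewrite -(addhNK u w) e; apply/ffunP => x; rewrite !ffunE add0r.
Qed.

Variable d1 : homl deg Ghat 1 -> homl deg Ghat 0.
Hypothesis hd1 : forall (nu : homl deg Ghat 1) (w : homu deg G 0),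
      chi chr (d1 nu) w = chi chr nu (@dcob _ deg bdC G dG 0 1 w).

Local Notation d0 := (@dcob _ deg bdC G dG 0 1).
Definition Dw (w : homu deg G 1) : Op deg G := diag_mx (\row_j ((w == d0 (bas j))%:R)).

Lemma card1_neq0 : (#|{: homl deg Ghat 1}|%:R : algC) != 0.
Proof. by rewrite (cardh deg hdual) pnatr_eq0 -lt0n; apply/card_gt0P; exists (zeroh deg G 1). Qed.

Lemma BopE w : Bop chr d1 w = Dw w.
Proof.
apply/matrixP => i j; rewrite /Bop /Dw !mxE summxE.
have [<-|nij] := eqVneq i j; last first.
  rewrite mulr0n big1 ?mulr0 // => b _.
  by rewrite !mxE (negbTE nij) mul0r mulr0.
under eq_bigr => b _ do rewrite !mxE eqxx mul1r hd1 -(chi_opp hdual) mulrC -(chiM hdual).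
rewrite (O2h hdual) addhN_eq0 mulr1n natrM mulrA mulVf ?mul1r //.
exact: card1_neq0.
Qed.

Lemma D_adj w : adj (Dw w) = Dw w.
Proof.
apply/matrixP => i j; rewrite adjE /Dw !mxE.
have [->|nij] := eqVneq i j; last by rewrite !mulr0n conjC0.
by rewrite /= !mulr1n conjC_nat.
Qed.

Lemma D_mul w w' : Dw w *m Dw w' = (w == w')%:R *: Dw w'.
Proof.
rewrite /Dw mulmx_diag; apply/matrixP => i j; rewrite !mxE.
case: (i == j) => /=; last by rewrite !mulr0n mulr0.
rewrite !mulr1n; case: (w' =P d0 (bas i)) => [<-|_] /=; first by rewrite mulr1.
by rewrite !mulr0.
Qed.

Lemma D_sum : \sum_(w : homu deg G 1) Dw w = 1%:M.
Proof.
apply/matrixP => i j; rewrite summxE !mxE.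
under eq_bigr => w _ do rewrite !mxE.
case: (i == j) => /=; last by rewrite big1 // => w _; rewrite mulr0n.
under eq_bigr do rewrite mulr1n.
rewrite (bigD1 (d0 (bas i))) //= big1 ?addr0 ?eqxx //.
by move=> w nw; rewrite (negbTE nw).
Qed.

Lemma AD_comm r w : Aop bdC dG chr r *m Dw w = Dw w *m Aop bdC dG chr r.
Proof.
rewrite /Dw mul_mx_diag mul_diag_mx; apply/matrixP => i j; rewrite !mxE.
rewrite -mulrA [RHS]mulrCA; congr (_ * _).
rewrite summxE mulr_suml mulr_sumr; apply: eq_bigr => a _; rewrite !mxE.
rewrite -mulrA [RHS]mulrCA; congr (_ * _).
have [e|] := eqVneq (bas i) (addh (bas j) (d a)); last by rewrite mulr0 mul0r.
rewrite e dcob_add (dd0 hgr hsq hdsq) addh0 mulrC.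
by [].
Qed.
End Main.

Theorem mainTheorem5
  (Cell : finType) (deg : Cell -> int) (bdC : Cell -> Cell -> int)
  (G : int -> finZmodType) (dG : forall n : int, {additive G n -> G (n - 1)})
  (Ghat : int -> finType) (chr : forall m : int, Ghat m -> G m -> algC)
  (d1 : homl deg Ghat 1 -> homl deg Ghat 0) :
  bdC_graded deg bdC -> bdC_sq0 bdC -> dG_sq0 dG -> is_dual chr ->
  (* d1 is the dual map d_1 : hom_1 -> hom_0 of d^0 : hom^0 -> hom^1 *)
  (forall (nu : homl deg Ghat 1) (w : homu deg G 0),
      chi chr (d1 nu) w = chi chr nu (@dcob _ deg bdC G dG 0 1 w)) ->
  forall (r r' : homl deg Ghat (-1)) (w w' : homu deg G 1),
    let A := @Aop _ deg bdC G dG Ghat chr in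
    let B := @Bop _ deg G Ghat chr d1 in
    [/\ A r *m B w = B w *m A r,
        @adj _ deg G (A r) = A r /\ @adj _ deg G (B w) = B w,
        A r *m A r' = (r == r')%:R *: A r' /\ B w *m B w' = (w == w')%:R *: B w'
      & \sum_(s : homl deg Ghat (-1)) A s = 1%:M /\ \sum_(v : homu deg G 1) B v = 1%:M].

Proof.
move=> hgr hsq hdsq hdual hd1 r r' w w' A B.
rewrite /A /B !(BopE hdual hd1).
split.
- exact: AD_comm.
- by rewrite A_adj // D_adj.
- by rewrite A_mul // D_mul.
- rewrite A_sum //; split => //.
  under eq_bigr do rewrite (BopE hdual hd1).
  exact: D_sum.
Qed.
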